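(* If an ES basic fusion operator $\nabla$ satisfies (ESF-U) and (ESF-I), then it satisfies (ESF-P).
   Context: Setting: epistemic space $(\mathcal E,B,\mathcal L_{\mathcal P})$ ($\mathcal E$ nonempty, $B:\mathcal E\to$ propositional formulas over finite $\mathcal P$, image modulo equivalence exactly the consistent formulas); agents: well-ordered set $\mathcal S$; society: nonempty finite $N\subseteq\mathcal S$; $N$-profile $\Phi:N\to\mathcal E$, $E_i=\Phi(i)$, identified with $E_i$ if $N=\{i\}$; profiles on $\{i_1<\dots<i_n\}$, $\{j_1<\dots<j_m\}$ equivalent if $n=m$ and entries coincide position-wise. ES basic fusion operator: a map $\nabla(\Phi,E)\in\mathcal E$ with (ESF1) $B(\nabla(\Phi,E))\vdash B(E)$; (ESF2) equivalent profiles and $B(E)\equiv B(E')$ give equivalent $B(\nabla)$; (ESF3) if $B(E)\equiv B(E')\wedge B(E'')$ then $B(\nabla(\Phi,E'))\wedge B(E'')\vdash B(\nabla(\Phi,E))$; (ESF4) if moreover $B(\nabla(\Phi,E'))\wedge B(E'')\nvdash\bot$ then $B(\nabla(\Phi,E))\vdash B(\nabla(\Phi,E'))\wedge B(E'')$. (ESF-U): for every society $N$, $N$-profile $\Phi$, $E$: if $E_i=E_j$ for all $i,j\in N$ then $B(\nabla(\Phi,E))\equiv B(\nabla(E_i,E))$ for all $i\in N$. (ESF-I): for every $N$, $N$-profiles $\Phi,\Phi'$ and $E$, if for every $E'$ with $B(E')\vdash B(E)$ one has $B(\nabla(E_j,E'))\equiv B(\nabla(E'_j,E'))$ for all $j\in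 N$, then $B(\nabla(\Phi,E))\equiv B(\nabla(\Phi',E))$. (ESF-P): for every $N$, $N$-profile $\Phi$, $E,E'$: if $\bigwedge_{i\in N}B(\nabla(E_i,E))\nvdash\bot$ and $B(\nabla(E_i,E))\wedge B(E')\vdash\bot$ for all $i\in N$, then $B(\nabla(\Phi,E))\wedge B(E')\vdash\bot$. *)

(* Defs.v *)
From HB Require Import structures.
From mathcomp Require Import all_boot all_order.
Set Implicit Arguments. Unset Strict Implicit. Unset Printing Implicit Defensive.
Import Order.TTheory.
Local Open Scope order_scope.

Inductive form (P : Type) : Type :=
  | FVar : P -> form P
  | FTop : form P
  | FBot : form P
  | FNeg : form P -> form P
  | FAnd : form P -> form P -> form P
  | FOr  : form P -> form P -> form P
  | FImp : form P -> form P -> form P.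
Arguments FTop {P}. Arguments FBot {P}.

Fixpoint eval (P : Type) (v : P -> bool) (f : form P) : bool :=
  match f with
  | FVar p => v p
  | FTop => true
  | FBot => false
  | FNeg g => ~~ eval v g
  | FAnd g h => eval v g && eval v h
  | FOr g h => eval v g || eval v h
  | FImp g h => eval v g ==> eval v h
  end.

(* classical propositional consequence phi |- psi (semantic; sound and complete) *)
Definition entails (P : Type) (phi psi : form P) : Prop :=
  forall v : P -> bool, eval v phi -> eval v psi.
Definition fequiv (P : Type) (phi psi : form P) : Prop :=
  entails phi psi /\ entails psi phi.
Definition consistent (P : Type) (phi : form P) : Prop := ~ entails phi FBot.

Definition epistemic_space (P : finType) (Ep : Type) (B : Ep -> form P) : Prop :=
  inhabited Ep /\
  (forall phi : form P, consistent phi <-> exists e : Ep, fequiv (B e) phi).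

(* A society (nonempty finite N ⊆ S) is represented by the list of its elements
   in strictly increasing order, i_1 < ... < i_n. *)
Definition well_ordered d (S : orderType d) : Prop :=
  well_founded (fun x y : S => x < y).

Definition society d (S : orderType d) (N : seq S) : bool :=
  sorted (fun x y : S => x < y) N && (N != [::]).

Definition profile (S : eqType) (Ep : Type) (N : seq S) : Type :=
  {i : S | i \in N} -> Ep.

Definition prof_equiv (S : eqType) (Ep : Type) (N M : seq S)
  (Phi : profile Ep N) (Psi : profile Ep M) : Prop :=
  size N = size M /\
  forall (x0 y0 : S) (k : nat) (hN : (k < size N)%N) (hM : (k < size M)%N),
    Phi (exist _ (nth x0 N k) (mem_nth x0 hN)) =
    Psi (exist _ (nth y0 M k) (mem_nth y0 hM)).

(* a fusion operator: nabla N Phi E ; only its values on societies matter *)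
Definition fusion_op (S : eqType) (Ep : Type) : Type :=
  forall N : seq S, profile Ep N -> Ep -> Ep.

(* nabla on the singleton profile {i} -> e, identified with e *)
Definition nabla1 (S : eqType) (Ep : Type) (nabla : fusion_op S Ep)
  (i : S) (e : Ep) (E : Ep) : Ep :=
  nabla [:: i] (fun _ => e) E.

Definition bigAndN (S : eqType) (P : Type) (N : seq S)
  (f : {i : S | i \in N} -> form P) : form P :=
  foldr (fun i acc => match (insub i : option {i : S | i \in N}) with
                      | Some x => FAnd (f x) acc
                      | None => acc end) FTop N.

Section Postulates.
Local Unset Implicit Arguments.
Variables (P : finType) (Ep : Type) (B : Ep -> form P).
Variables (d : Order.disp_t) (S : orderType d) (nabla : fusion_op S Ep).

Definition ESF1 : Prop :=
  forall (N : seq S) (Phi : profile Ep N) (E : Ep), society N ->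
    entails (B (nabla N Phi E)) (B E).

Definition ESF2 : Prop :=
  forall (N M : seq S) (Phi : profile Ep N) (Psi : profile Ep M) (E E' : Ep),
    society N -> society M -> prof_equiv Phi Psi -> fequiv (B E) (B E') ->
    fequiv (B (nabla N Phi E)) (B (nabla M Psi E')).

Definition ESF3 : Prop :=
  forall (N : seq S) (Phi : profile Ep N) (E E' E'' : Ep), society N ->
    fequiv (B E) (FAnd (B E') (B E'')) ->
    entails (FAnd (B (nabla N Phi E')) (B E'')) (B (nabla N Phi E)).

Definition ESF4 : Prop :=
  forall (N : seq S) (Phi : profile Ep N) (E E' E'' : Ep), society N ->
    fequiv (B E) (FAnd (B E') (B E'')) ->
    consistent (FAnd (B (nabla N Phi E')) (B E'')) ->
    entails (B (nabla N Phi E)) (FAnd (B (nabla N Phi E')) (B E'')).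

Definition basic_fusion_operator : Prop := ESF1 /\ ESF2 /\ ESF3 /\ ESF4.

Definition ESF_U : Prop :=
  forall (N : seq S) (Phi : profile Ep N) (E : Ep), society N ->
    (forall i j : {i : S | i \in N}, Phi i = Phi j) ->
    forall i : {i : S | i \in N},
      fequiv (B (nabla N Phi E)) (B (nabla1 nabla (val i) (Phi i) E)).

Definition ESF_I : Prop :=
  forall (N : seq S) (Phi Phi' : profile Ep N) (E : Ep), society N ->
    (forall E' : Ep, entails (B E') (B E) ->
       forall j : {i : S | i \in N},
         fequiv (B (nabla1 nabla (val j) (Phi j) E'))
                (B (nabla1 nabla (val j) (Phi' j) E'))) ->
    fequiv (B (nabla N Phi E)) (B (nabla N Phi' E)).

Definition ESF_P : Prop :=
  forall (N : seq S) (Phi : profile Ep N) (E E' : Ep), society N ->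
    consistent (bigAndN (fun j => B (nabla1 nabla (val j) (Phi j) E))) ->
    (forall j : {i : S | i \in N},
       entails (FAnd (B (nabla1 nabla (val j) (Phi j) E)) (B E')) FBot) ->
    entails (FAnd (B (nabla N Phi E)) (B E')) FBot.
End Postulates.

Arguments ESF1 {P Ep} B {d S} nabla.
Arguments ESF2 {P Ep} B {d S} nabla.
Arguments ESF3 {P Ep} B {d S} nabla.
Arguments ESF4 {P Ep} B {d S} nabla.
Arguments basic_fusion_operator {P Ep} B {d S} nabla.
Arguments ESF_U {P Ep} B {d S} nabla.
Arguments ESF_I {P Ep} B {d S} nabla.
Arguments ESF_P {P Ep} B {d S} nabla.

(* Main.v *)
Require Import Defs.
From mathcomp Require Import all_boot all_order.
From Stdlib Require Import Classical FunctionalExtensionality.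
Set Implicit Arguments. Unset Strict Implicit.

Definition wf (P : finType) (u : P -> bool) : form P :=
  foldr (fun p acc => FAnd (if u p then FVar p else FNeg (FVar p)) acc) FTop (enum P).

Lemma eval_wf (P : finType) (u v : P -> bool) : eval v (wf u) -> v = u.
Proof.
move=> H; apply: functional_extensionality => p.
have : p \in enum P by rewrite mem_enum.
move: H; rewrite /wf; elim: (enum P) => [|q s IH] //= /andP[Hq Hs].
rewrite inE => /orP[/eqP->|]; last exact: IH.
by move: Hq; case: (u q) => /=; [|move/negbTE]; move=> ->.
Qed.

Lemma eval_wf_self (P : finType) (u : P -> bool) : eval u (wf u).
Proof.
rewrite /wf; elim: (enum P) => [|q s IH] //=.
by rewrite IH andbT; case E: (u q) => //=; rewrite E.
Qed.

Lemma foldr_eval (S : eqType) (P : Type) (N : seq S)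
  (f : {i : S | i \in N} -> form P) v (s : seq S) :
  eval v (foldr (fun i acc => match (insub i : option {i : S | i \in N}) with
                      | Some x => FAnd (f x) acc
                      | None => acc end) FTop s) ->
  forall j : {i : S | i \in N}, val j \in s -> eval v (f j).
Proof.
elim: s => [|x s IH] //= H j.
rewrite inE => /orP[/eqP Ex|Hs].
  move: H; subst x; rewrite valK /= => /andP[] //.
apply: IH Hs; move: H; case: insub => //= y /andP[] //.
Qed.

Lemma bigAndN_eval (S : eqType) (P : Type) (N : seq S)
  (f : {i : S | i \in N} -> form P) v :
  eval v (bigAndN f) -> forall j, eval v (f j).
Proof. move=> H j; apply: (foldr_eval H); exact: valP. Qed.

Lemma cons_ex (P : Type) (phi : form P) : consistent phi -> exists v, eval v phi.
Proof.
move=> H; apply: NNPP => H0; apply: H => v Hv; case: H0; by exists v.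
Qed.

Lemma ex_cons (P : Type) (phi : form P) v : eval v phi -> consistent phi.
Proof. by move=> H H'; have := H' v H. Qed.

Theorem mainTheorem12 (P : finType) (Ep : Type) (B : Ep -> form P)
  (d : Order.disp_t) (S : orderType d) (nabla : fusion_op S Ep) :
  epistemic_space B -> well_ordered S ->
  basic_fusion_operator B nabla ->
  ESF_U B nabla -> ESF_I B nabla -> ESF_P B nabla.
Proof.
move=> [_ HES] _ [H1 [H2 [H3 H4]]] HU HI N Phi E E' soc Hcons Hdis w /= /andP[HwN HwE'].
have Bcons : forall e, exists v, eval v (B e).
  move=> e; apply: cons_ex; apply/HES; exists e; by split.
have [u Hu] := cons_ex Hcons.
have Hu' := bigAndN_eval Hu.
have [x0 Hx0] : exists x, x \in N.
  move: soc; rewrite /society; case: (N) => [|x s] /andP[] // _ _.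
  by exists x; rewrite inE eqxx.
pose j0 : {i : S | i \in N} := exist _ x0 Hx0.
have HuE : eval u (B E).
  apply: (H1 [:: val j0] (fun _ => Phi j0)) => //; exact: Hu'.
have HwE : eval w (B E) by apply: (H1 N Phi).
have Hwphi : forall k : {i : S | i \in N}, ~~ eval w (B (nabla1 nabla (val k) (Phi k) E)).
  move=> k; apply/negP => Hk; have := Hdis k w; by rewrite /= Hk HwE' => /(_ isT).
have [Euw HEuw] : exists e, fequiv (B e) (FOr (wf u) (wf w)).
  apply/HES; apply: (@ex_cons _ _ u); by rewrite /= eval_wf_self.
have Huw : forall v, eval v (B Euw) -> v = u \/ v = w.
  move=> v /(HEuw.1 v) /= /orP[] /eval_wf; by [left|right].
have HuEuw : eval u (B Euw) by apply: HEuw.2; rewrite /= eval_wf_self.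
have HwEuw : eval w (B Euw) by apply: HEuw.2; rewrite /= eval_wf_self orbT.
have [E2 HE2] : exists e, fequiv (B e) (FAnd (B E) (B Euw)).
  apply/HES; apply: (@ex_cons _ _ w); by rewrite /= HwE HwEuw.
have HwN2 : eval w (B (nabla N Phi E2)).
  apply: (H3 N Phi E2 E Euw soc HE2); by rewrite /= HwN HwEuw.
have single : forall e R x, (forall v, eval v (B R) -> v = x) -> B e = B R ->
    forall v, eval v (B e) <-> v = x.
  move=> e R x Hx -> v; split; first exact: Hx.
  move=> ->; have [v' Hv'] := Bcons R; by rewrite -(Hx v' Hv').
have L : forall (i : S) (k : {i : S | i \in N}) E'', entails (B E'') (B E2) ->
    forall v, eval v (B (nabla1 nabla i (Phi k) E'')) <->
              (if eval u (B E'') then v = u else v = w).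
  move=> i k E'' HE'' v.
  have socI : forall a : S, society [:: a] by [].
  have Hsub : forall v, eval v (B E'') -> v = u \/ v = w.
    move=> v' /HE'' /(HE2.1 v') /= /andP[_]; exact: Huw.
  have R1 : forall v, eval v (B (nabla1 nabla i (Phi k) E'')) -> eval v (B E'').
    move=> v'; exact: (H1 [:: i] (fun _ => Phi k) E'' (socI i)).
  case Hu2: (eval u (B E'')); last first.
    apply: (single _ (nabla1 nabla i (Phi k) E'')) => // v' /R1 Hv'.
    case: (Hsub v' Hv') => // Eq; by rewrite -Eq Hv' in Hu2.
  case Hw2: (eval w (B E'')); last first.
    apply: (single _ (nabla1 nabla i (Phi k) E'')) => // v' /R1 Hv'.
    case: (Hsub v' Hv') => // Eq; by rewrite -Eq Hv' in Hw2.
  have Eq2 : fequiv (B E'') (B E2).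
    split => // v' /(HE2.1 v') /= /andP[_] /Huw [] ->; by [].
  have HR := H2 [:: i] [:: val k] (fun _ => Phi k) (fun _ => Phi k) E'' E2
    (socI i) (socI (val k)) (conj erefl (fun _ _ _ _ _ => erefl)) Eq2.
  have R0 : forall v, eval v (B (nabla1 nabla (val k) (Phi k) E2)) -> v = u.
    move=> v' Hv'.
    have := H4 [:: val k] (fun _ => Phi k) E2 E Euw (socI (val k)) HE2.
    have Hc : eval u (FAnd (B (nabla1 nabla (val k) (Phi k) E)) (B Euw)).
      by rewrite /= HuEuw andbT; exact: Hu'.
    move=> /(_ (ex_cons Hc)) H.
    have /= /andP[Ha Hb] := H _ Hv'.
    case: (Huw v' Hb) => // Ew; subst v'.
    by move: (Hwphi k); rewrite Ha.
  split.
    move=> /(HR.1 v) /R0 //.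
  move=> ->; have [v' Hv'] := Bcons (nabla1 nabla (val k) (Phi k) E2).
  have Ev := R0 v' Hv'; subst v'; exact: HR.2.
have HuE2 : eval u (B E2) by apply: HE2.2; rewrite /= HuE HuEuw.
pose Phi' : profile Ep N := fun _ => Phi j0.
have HIeq : fequiv (B (nabla N Phi E2)) (B (nabla N Phi' E2)).
  apply: (HI N Phi Phi' E2 soc) => E'' HE'' j.
  split => v Hv.
    exact: ((L (val j) j0 E'' HE'' v).2 ((L (val j) j E'' HE'' v).1 Hv)).
  exact: ((L (val j) j E'' HE'' v).2 ((L (val j) j0 E'' HE'' v).1 Hv)).
have HUeq := HU N Phi' E2 soc (fun _ _ => erefl) j0.
have Hw1 : eval w (B (nabla1 nabla (val j0) (Phi j0) E2)).
  by apply: HUeq.1; apply: HIeq.1.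
have := (L (val j0) j0 E2 (fun v H => H) w).1 Hw1; rewrite HuE2 => Ewu.
by move: (Hwphi j0); rewrite Ewu Hu'.
Qed.
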